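(* Let $\mathbf{H}_{\mathrm{SC}}$, $L_2$, $d$, the MD mapping $M$ and the matrix $\mathbf{H}^{\mathrm{MD}}_{\mathrm{SC}}$ be as in the context. Let $e_1,e_2,\dots,e_k$ be the edges, listed in traversal order, of a cycle of length $k$ in the Tanner graph of $\mathbf{H}_{\mathrm{SC}}$, labeled so that $e_u$ and $e_{u+1}$ share a check node (row) when $u$ is odd and share a variable node (column) when $u$ is even, where indices are taken cyclically ($e_{k+1}=e_1$). Define $$\Delta=\Big(-\sum_{u=1}^{k}(-1)^u M(e_u)\Big) \bmod L_2\in\{0,\dots,L_2-1\},\qquad \tau=\gcd(L_2,\Delta),$$ with the convention $\gcd(L_2,0)=L_2$. Then the subgraph of the Tanner graph of $\mathbf{H}^{\mathrm{MD}}_{\mathrm{SC}}$ formed by the $L_2k$ lifted edges $e_u^{(a)}$, $1\le u\le k$, $a\in\mathbb{Z}_{L_2}$, together with their endpoints, is a vertex-disjoint union of exactly $\tau$ cycles, each of length $L_2k/\tau$.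
   Context: $\mathbf{H}_{\mathrm{SC}}$ is a binary matrix partitioned into $z\times z$ blocks called circulants; each block is either the zero matrix or a cyclic shift of the $z\times z$ identity matrix (a nonzero circulant). Its Tanner graph has one variable node per column, one check node per row, and an edge $(r,c)$ for each entry $\mathbf{H}_{\mathrm{SC}}(r,c)=1$; each edge lies in exactly one nonzero circulant. Fix integers $1\le d\le L_2$. An MD mapping $M$ assigns to each nonzero circulant an integer in $\{0,1,\dots,d-1\}$; for an edge $e$ write $M(e)$ for the value of $M$ on the circulant containing $e$. (Equivalently, $\mathbf{H}_{\mathrm{SC}}=\mathbf{H}'_{\mathrm{SC}}+\sum_{t=1}^{d-1}\mathbf{A}_t$, where $\mathbf{A}_t$ keeps exactly the circulants with $M=t$ and $\mathbf{H}'_{\mathrm{SC}}$ those with $M=0$.) The MD-SC matrix $\mathbf{H}^{\mathrm{MD}}_{\mathrm{SC}}$ is the $L_2\times L_2$ block matrix whose block (segment) $\mathbf{S}_{a,b}$, $a,b\in\mathbb{Z}_{L_2}$, equals $\mathbf{H}'_{\mathrm{SC}}$ if $a=b$, equals $\mathbf{A}_t$ if $a-b\equiv t \pmod{L_2}$ with $1\le t\le d-1$, and is zero otherwise. Thus its rows are indexed by pairs $(a,r)$ and columns by pairs $(b,c)$, and the entry at $((a,r),(b,c))$ is $1$ iff $\mathbf{H}_{\mathrm{SC}}(r,c)=1$ and $a-b\equiv M((r,c))\pmod{L_2}$. For an edge $e=(r,c)$ of $\mathbf{H}_{\mathrm{SC}}$ and $a\in\mathbb{Z}_{L_2}$, its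 lifted edge $e^{(a)}$ is the edge of the Tanner graph of $\mathbf{H}^{\mathrm{MD}}_{\mathrm{SC}}$ joining variable node $(a,c)$ and check node $((a+M(e))\bmod L_2, r)$. A cycle of length $k$ in a Tanner graph is a closed path with $k$ distinct edges and no repeated vertices. *)

(* Defs.v *)
From HB Require Import structures.
From mathcomp Require Import all_boot all_order all_algebra.
Set Implicit Arguments. Unset Strict Implicit. Unset Printing Implicit Defensive.

(* An edge is a pair (r, c) : R * C joining check node r and variable node c.
   Nodes are of type R + C : inl r = check node r, inr c = variable node c. *)
Definition incident (R C : Type) (e : R * C) (x : R + C) : Prop :=
  x = inl e.1 \/ x = inr e.2.

Definition is_cycle (R C : finType) (E : {set R * C}) (k : nat)
  (e : 'I_k -> R * C) : Prop :=
  1 < k /\ injective e /\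
  exists v : 'I_k -> (R + C)%type, injective v /\
    forall i : 'I_k, e i \in E /\ incident (e i) (v i) /\ incident (e i) (v (ordS i)).

Definition tanner (R C : finType) (H : R -> C -> bool) : {set R * C} :=
  [set p | H p.1 p.2].

(* H is partitioned into z x z blocks; each block is zero or a cyclic shift of
   the z x z identity matrix. *)
Definition circulant_blocks (m n z : nat) (H : 'M[bool]_(m, n)) : Prop :=
  forall i j : nat,
    (forall (r : 'I_m) (c : 'I_n), r %/ z = i -> c %/ z = j -> H r c = false) \/
    (exists s : nat, forall (r : 'I_m) (c : 'I_n), r %/ z = i -> c %/ z = j ->
        H r c = (c %% z == (r %% z + s) %% z)).

(* value of the MD mapping M (given on block indices) on an edge *)
Definition Medge (m n z : nat) (M : nat -> nat -> nat) (e : 'I_m * 'I_n) : nat :=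
  M (e.1 %/ z) (e.2 %/ z).

Definition HMD (m n z L2 : nat) (H : 'M[bool]_(m, n)) (M : nat -> nat -> nat)
  (x : 'I_L2 * 'I_m) (y : 'I_L2 * 'I_n) : bool :=
  H x.2 y.2 && (nat_of_ord x.1 == y.1 + Medge z M (x.2, y.2) %[mod L2]).

Definition modL (L : nat) (hL : 0 < L) (x : nat) : 'I_L := Ordinal (ltn_pmod x hL).

Definition lifted_edge (m n z L2 : nat) (hL : 0 < L2) (M : nat -> nat -> nat)
  (e : 'I_m * 'I_n) (a : 'I_L2) : ('I_L2 * 'I_m) * ('I_L2 * 'I_n) :=
  ((modL hL (a + Medge z M e), e.1), (a, e.2)).

(* Delta = (- sum_{u=1}^k (-1)^u M(e_u)) mod L2, with e_u = e (u-1) *)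
Definition Delta (m n z L2 k : nat) (M : nat -> nat -> nat)
  (e : 'I_k -> 'I_m * 'I_n) : nat :=
  absz ((- \sum_(i < k) (-1) ^+ i.+1 * (Medge z M (e i))%:Z) %% (L2 : int))%Z.

Definition disjoint_union_of_cycles (R C : finType) (S : {set R * C}) (t l : nat) : Prop :=
  exists P : {set {set R * C}},
    partition P S /\ #|P| = t /\
    (forall B, B \in P -> exists f : 'I_l -> R * C,
        is_cycle S f /\ B = [set f i | i : 'I_l]) /\
    (forall B1 B2, B1 \in P -> B2 \in P -> B1 != B2 ->
        forall x y, x \in B1 -> y \in B2 -> x.1 != y.1 /\ x.2 != y.2).

(* Main.v *)
Require Import Defs.
From HB Require Import structures.
From mathcomp Require Import all_boot all_order all_algebra.
From mathcomp Require Import zify ring.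
Set Implicit Arguments. Unset Strict Implicit. Unset Printing Implicit Defensive.
Import GRing.Theory Num.Theory.

Section Base.
Variables (R C : finType) (k : nat) (e : 'I_k -> R * C) (v : 'I_k -> (R + C)%type).
Hypothesis hk : 1 < k.
Hypothesis einj : injective e.
Hypothesis vinj : injective v.
Hypothesis hinc : forall i, incident (e i) (v i) /\ incident (e i) (v (ordS i)).
Hypothesis hlab : forall i : 'I_k,
      if odd i then (e i).2 = (e (ordS i)).2 else (e i).1 = (e (ordS i)).1.

Lemma ordS_neq (i : 'I_k) : ordS i != i.
Proof.
apply/eqP => /(congr1 val) /=; case: i => i /= hi.
have [hlt|heq] : i.+1 < k \/ i.+1 = k by lia.
  by rewrite modn_small //; lia.
by rewrite heq modnn; lia.
Qed.

Lemma vS (i : 'I_k) : v (ordS i) = if odd i then inr (e i).2 else inl (e i).1.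
Proof.
have := hlab i; have [_ h1] := hinc i; have [h2 _] := hinc (ordS i).
have hne : e i <> e (ordS i) by move/einj/eqP; rewrite eq_sym (negbTE (ordS_neq i)).
case: (odd i) => hl.
  case: h1 => // h1; case: h2; rewrite h1 //.
  move=> [] h; exfalso; apply: hne; by rewrite [e i]surjective_pairing [e (ordS i)]surjective_pairing h hl.
case: h1 => // h1; case: h2; rewrite h1 //.
move=> [] h; exfalso; apply: hne; by rewrite [e i]surjective_pairing [e (ordS i)]surjective_pairing h hl.
Qed.

Lemma v0 (i : 'I_k) : v i = if odd i then inl (e i).1 else inr (e i).2.
Proof.
have [h1 _] := hinc i; have := vS i.
have hne : v i <> v (ordS i) by move/vinj/eqP; rewrite eq_sym (negbTE (ordS_neq i)).
case: (odd i) => hv; rewrite hv in hne; case: h1 => // h1; by rewrite h1 in hne.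
Qed.

Lemma k_even : ~~ odd k.
Proof.
apply/negP => ok.
have hk1 : k.-1 < k by lia.
pose j := Ordinal hk1.
have ej : ~~ odd j by rewrite /= -subn1 oddB ?ok //; lia.
have hS : ordS j = Ordinal (ltnW hk) by apply: val_inj => /=; rewrite prednK ?modnn //; lia.
pose o1 := Ordinal hk.
have h0 : ordS (Ordinal (ltnW hk)) = o1 by apply: val_inj => /=; rewrite modn_small.
have := vS j; rewrite (negbTE ej) hS.
have := vS (Ordinal (ltnW hk)); rewrite /= h0.
have := hlab j; rewrite (negbTE ej) hS => -> <- hv.
move/vinj: hv => /(congr1 val) //.
Qed.

Lemma v_inl (i : 'I_k) : inl (e i).1 = v (if odd i then i else ordS i).
Proof. by case oi: (odd i); [rewrite v0 oi | rewrite vS oi]. Qed.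

Lemma v_inr (i : 'I_k) : inr (e i).2 = v (if odd i then ordS i else i).
Proof. by case oi: (odd i); [rewrite vS oi | rewrite v0 oi]. Qed.

Lemma row_share (i i' : 'I_k) : (e i).1 = (e i').1 ->
  i = i' \/ (i' = ordS i /\ ~~ odd i) \/ (i = ordS i' /\ ~~ odd i').
Proof.
move=> h; have : inl (e i).1 = inl (e i').1 :> (R + C)%type by rewrite h.
rewrite !v_inl => /vinj.
case oi: (odd i); case oi': (odd i') => h'; auto.
by left; apply: ordS_inj.
Qed.

Lemma col_share (i i' : 'I_k) : (e i).2 = (e i').2 ->
  i = i' \/ (i' = ordS i /\ odd i) \/ (i = ordS i' /\ odd i').
Proof.
move=> h; have : inr (e i).2 = inr (e i').2 :> (R + C)%type by rewrite h.
rewrite !v_inr => /vinj.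
case oi: (odd i); case oi': (odd i') => h'; auto.
by left; apply: ordS_inj.
Qed.

End Base.

Lemma NL (L D q : nat) : 0 < L -> L %| q * D -> q < L %/ gcdn L D -> q = 0.
Proof.
move=> hL hdv hq.
set t := gcdn L D in hq.
have ht : 0 < t by rewrite gcdn_gt0 hL.
have h1 : L %| q * t.
  by rewrite /t muln_gcdr dvdn_gcd hdv dvdn_mull.
have hL' : L = L %/ t * t by rewrite divnK // dvdn_gcdl.
move: h1; rewrite {1}hL' dvdn_pmul2r // => h2.
case: q hdv h2 hq => // q _ h2 hq.
by have := dvdn_leq (isT : 0 < q.+1) h2; lia.
Qed.

Section Lift.
Variables (m n z L2 : nat) (hL : 0 < L2) (M : nat -> nat -> nat) (k : nat).
Variable (e : 'I_k -> 'I_m * 'I_n).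
Hypothesis hk : 1 < k.
Hypothesis keven : ~~ odd k.

Let hk0 : 0 < k := ltnW hk.
Definition E (j : nat) := e (modL hk0 j).
Definition Mn (j : nat) : nat := Medge z M (E j).
Definition s (t : nat) : int :=
  \sum_(u < t) (if odd u then 0 else (Mn u)%:Z - (Mn u.+1)%:Z)%R.
Definition D := Delta z L2 M e.

Lemma E_mod j : E (j %% k) = E j.
Proof. by rewrite /E; congr e; apply: val_inj; rewrite /= modn_mod. Qed.
Lemma E_ord (i : 'I_k) : E i = e i.
Proof. by rewrite /E; congr e; apply: val_inj; rewrite /= modn_small. Qed.
Lemma Mn_mod j : Mn (j %% k) = Mn j.
Proof. by rewrite /Mn E_mod. Qed.

Lemma s_even (t : nat) : s t.*2 = (\sum_(u < t.*2) (-1) ^+ u * (Mn u)%:Z)%R.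
Proof.
elim: t => [|t IH]; first by rewrite /s !big_ord0.
rewrite doubleS /s !big_ord_recr /= -/(s _) IH /= odd_double /=.
have h2 : ((-1) ^+ t.*2 = 1 :> int)%R by rewrite -mul2n exprM expr2 mulN1r opprK expr1n.
rewrite exprS h2; ring.
Qed.

Lemma s_k : s k = (\sum_(i < k) (-1) ^+ i * (Medge z M (e i))%:Z)%R.
Proof.
have hk2 : k = k./2.*2 by have := odd_double_half k; rewrite (negbTE keven) add0n.
rewrite {1}hk2 s_even -hk2; apply: eq_bigr => i _.
by rewrite /Mn E_ord.
Qed.

Lemma D_eq : (D%:Z = s k %% L2%:Z)%Z.
Proof.
rewrite /D /Delta s_k.
have -> : (- \sum_(i < k) (-1) ^+ i.+1 * (Medge z M (e i))%:Z =
          \sum_(i < k) (-1) ^+ i * (Medge z M (e i))%:Z)%R.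
  rewrite -sumrN; apply: eq_bigr => i _; rewrite exprS; ring.
by rewrite gez0_abs // modz_ge0 //; lia.
Qed.

Definition tau := gcdn L2 D.
Definition mm := L2 %/ tau.
Definition l := mm * k.
Definition lay (a j : nat) : int := (a%:Z + (j %/ k)%:Z * D%:Z + s (j %% k))%R.

Lemma odd_mod j : odd (j %% k) = odd j.
Proof. by rewrite {2}(divn_eq j k) oddD oddM (negbTE keven) andbF. Qed.

Lemma s_km1 : s k.-1 = s k.
Proof.
have ok : odd k.-1 by move: keven hk; case: k => //= k' /negPn.
rewrite /s; case: k hk ok => // k' _ /= ok.
by rewrite big_ord_recr /= ok addr0.
Qed.

Lemma s_succ r : r.+1 < k -> s r.+1 = (s r + (if odd r then 0 else (Mn r)%:Z - (Mn r.+1)%:Z))%R.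
Proof. by move=> _; rewrite /s big_ord_recr. Qed.

Lemma step a j : (L2%:Z %| (lay a j.+1 - lay a j - (if odd j then 0 else (Mn j)%:Z - (Mn j.+1)%:Z))%R)%Z.
Proof.
have hr := ltn_pmod j hk0.
rewrite /lay modnS divnS //.
case: ifP => hdv.
  have hr1 : (j %% k).+1 = k.
    have : k %| (j %% k).+1.
      by move: hdv; rewrite {1}(divn_eq j k) -addnS dvdn_addr // dvdn_mull.
    by move/dvdn_leq => /(_ isT); lia.
  have hr2 : j %% k = k.-1 by lia.
  have oj : odd j by rewrite -odd_mod hr2; move: keven hk; case: k => //= k' /negPn.
  rewrite oj hr2 s_km1 /s big_ord0 /= -/(s k).
  have -> : (((1 + j %/ k)%N)%:Z * D%:Z = D%:Z + (j %/ k)%:Z * D%:Z)%R by rewrite PoszD; ring.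
  have -> : ((a%:Z + (D%:Z + (j %/ k)%:Z * D%:Z) + 0) - (a%:Z + (j %/ k)%:Z * D%:Z + s k) - 0 =
     D%:Z - s k)%R by ring.
  by rewrite -eqz_mod_dvd D_eq modz_mod.
have hlt : (j %% k).+1 < k.
  case: (ltngtP (j %% k).+1 k) => // h; first by lia.
  by move: hdv; rewrite {1}(divn_eq j k) -addnS h dvdn_addr ?dvdn_mull // dvdnn.
rewrite add0n s_succ //.
rewrite odd_mod Mn_mod.
have -> : Mn (j %% k).+1 = Mn j.+1 by rewrite -[RHS]Mn_mod modnS hdv.
by rewrite (_ : (_ - _ - _)%R = 0%R) ?dvdz0 //; ring.
Qed.

Lemma tau_gt0 : 0 < tau. Proof. by rewrite gcdn_gt0 hL. Qed.
Lemma tau_dvdL : tau %| L2. Proof. exact: dvdn_gcdl. Qed.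
Lemma tau_dvdD : tau %| D. Proof. exact: dvdn_gcdr. Qed.
Lemma mm_gt0 : 0 < mm.
Proof. by rewrite divn_gt0 ?tau_gt0 // dvdn_leq // tau_dvdL. Qed.
Lemma mmD : L2 %| mm * D.
Proof. by rewrite mulnC /mm /tau -muln_divCA_gcd dvdn_mulr. Qed.
Lemma l_gt1 : 1 < l.
Proof. have := mm_gt0; rewrite /l; nia. Qed.
Lemma l_even : ~~ odd l.
Proof. by rewrite /l oddM (negbTE keven) andbF. Qed.
Lemma l_eq : L2 * k %/ tau = l.
Proof. by rewrite /l /mm divn_mulAC // tau_dvdL. Qed.

Lemma dvdz_nat (a b : nat) : (a %| b)%N -> (a%:Z %| b%:Z)%Z.
Proof. by []. Qed.

Lemma period a j : (L2%:Z %| (lay a (j + l) - lay a j)%R)%Z.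
Proof.
rewrite /lay /l addnC divnMDl // modnMDl.
rewrite (_ : (_ - _)%R = Posz (mm * D)) ?dvdz_nat ?mmD //.
rewrite PoszD PoszM; ring.
Qed.

Lemma dvdz_tauL x : (L2%:Z %| x)%Z -> (tau%:Z %| x)%Z.
Proof. by apply: dvdz_trans; apply: dvdz_nat; exact: tau_dvdL. Qed.

Lemma class a j : (tau%:Z %| (lay a j - s (j %% k) - a%:Z)%R)%Z.
Proof.
rewrite /lay (_ : (_ - _ - _)%R = (j %/ k)%:Z * D%:Z)%R; last by ring.
by apply: dvdz_mull; apply: dvdz_nat; exact: tau_dvdD.
Qed.

Lemma s_k_tau : (tau%:Z %| s k)%Z.
Proof.
rewrite (_ : s k = (s k - D%:Z) + D%:Z)%R; last by ring.
apply: rpredD; last by apply: dvdz_nat; exact: tau_dvdD.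
apply: dvdz_tauL; rewrite -eqz_mod_dvd D_eq modz_mod //.
Qed.

Definition bl (a j : nat) : nat := absz (lay a j %% L2%:Z)%Z.
Definition G (j b : nat) := lifted_edge z hL M (E j) (modL hL b).
Definition F (a j : nat) := G j (bl a j).

Lemma bl_int a j : Posz (bl a j) = (lay a j %% L2%:Z)%Z.
Proof. by rewrite /bl gez0_abs // modz_ge0 //; lia. Qed.
Lemma bl_lt a j : bl a j < L2.
Proof.
have : (Posz (bl a j) < Posz L2)%R by rewrite bl_int ltz_pmod //; lia.
by rewrite ltz_nat.
Qed.
Lemma dvd_bl a j : (L2%:Z %| ((bl a j)%:Z - lay a j)%R)%Z.
Proof. by rewrite bl_int -eqz_mod_dvd modz_mod. Qed.

Lemma nat_congd (d x y : nat) : (d%:Z %| (x%:Z - y%:Z)%R)%Z -> x %% d = y %% d.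
Proof. by rewrite -eqz_mod_dvd !modz_nat => /eqP []. Qed.
Lemma nat_cong (x y : nat) : (L2%:Z %| (x%:Z - y%:Z)%R)%Z -> x %% L2 = y %% L2.
Proof. exact: nat_congd. Qed.
Lemma cong_nat (x y : nat) : x %% L2 = y %% L2 -> (L2%:Z %| (x%:Z - y%:Z)%R)%Z.
Proof. by move=> h; rewrite -eqz_mod_dvd !modz_nat h. Qed.

Lemma dvd3 (d A B C X : int) : (d %| A)%Z -> (d %| B)%Z -> (d %| C)%Z -> X = (A + B - C)%R -> (d %| X)%Z.
Proof. by move=> hA hB hC ->; rewrite rpredB ?rpredD. Qed.

Lemma dvd2 (d A B X : int) : (d %| A)%Z -> (d %| B)%Z -> X = (A - B)%R -> (d %| X)%Z.
Proof. by move=> hA hB ->; rewrite rpredB. Qed.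

Lemma F_eq2 a j a' j' : (F a j).2 = (F a' j').2 ->
  (E j).2 = (E j').2 /\ (L2%:Z %| (lay a j - lay a' j')%R)%Z.
Proof.
case=> h1 h2; split => //.
move: h1; rewrite !modn_small ?bl_lt // => hb.
apply: (dvd2 (dvd_bl a' j') (dvd_bl a j)); rewrite hb; ring.
Qed.

Lemma F_eq1 a j a' j' : (F a j).1 = (F a' j').1 ->
  (E j).1 = (E j').1 /\ (L2%:Z %| ((lay a j + (Mn j)%:Z) - (lay a' j' + (Mn j')%:Z))%R)%Z.
Proof.
case=> h1 h2; split => //.
move: h1; rewrite !(modn_small (bl_lt _ _)) => hb.
have := cong_nat hb; rewrite !PoszD => hc.
apply: (dvd3 hc (dvd_bl a' j') (dvd_bl a j)); rewrite /Mn /Medge; ring.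
Qed.

Lemma F_eq a j a' j' : F a j = F a' j' ->
  E j = E j' /\ (L2%:Z %| (lay a j - lay a' j')%R)%Z.
Proof.
move=> h; have [h1 h2] := F_eq2 (congr1 snd h).
have [h3 _] := F_eq1 (congr1 fst h).
by split => //; rewrite [E j]surjective_pairing [E j']surjective_pairing h1 h3.
Qed.

Lemma bl_eq a j a' j' : (L2%:Z %| (lay a j - lay a' j')%R)%Z -> bl a j = bl a' j'.
Proof.
move=> h; rewrite -(modn_small (bl_lt a j)) -(modn_small (bl_lt a' j')).
apply: nat_cong; apply: (dvd3 h (dvd_bl a j) (dvd_bl a' j')); ring.
Qed.

Lemma F_mk2 a j a' j' : (E j).2 = (E j').2 -> (L2%:Z %| (lay a j - lay a' j')%R)%Z ->
  (F a j).2 = (F a' j').2.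
Proof.
move=> h1 h2; rewrite /F /G /lifted_edge /=; rewrite h1; congr pair.
by apply: val_inj; rewrite /= (bl_eq h2).
Qed.

Lemma F_mk1 a j a' j' : (E j).1 = (E j').1 ->
  (L2%:Z %| ((lay a j + (Mn j)%:Z) - (lay a' j' + (Mn j')%:Z))%R)%Z ->
  (F a j).1 = (F a' j').1.
Proof.
move=> h1 h2; rewrite /F /G /lifted_edge /=; rewrite h1; congr pair.
apply: val_inj => /=; rewrite !(modn_small (bl_lt _ _)).
apply: nat_cong; rewrite !PoszD.
apply: (dvd3 h2 (dvd_bl a j) (dvd_bl a' j')); rewrite /Mn /Medge; ring.
Qed.

Hypothesis einj : injective e.
Hypothesis hlab : forall i : 'I_k,
      if odd i then (e i).2 = (e (ordS i)).2 else (e i).1 = (e (ordS i)).1.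
Hypothesis hrow : forall i i' : 'I_k, (e i).1 = (e i').1 ->
  i = i' \/ (i' = ordS i /\ ~~ odd i) \/ (i = ordS i' /\ ~~ odd i').
Hypothesis hcol : forall i i' : 'I_k, (e i).2 = (e i').2 ->
  i = i' \/ (i' = ordS i /\ odd i) \/ (i = ordS i' /\ odd i').

Definition I (j : nat) : 'I_k := modL hk0 j.
Definition kap (a j : nat) : int := (lay a j - s (j %% k))%R.


Lemma kap_eq a a' j j' : a < tau -> a' < tau ->
  (tau%:Z %| (kap a j - kap a' j')%R)%Z -> a = a'.
Proof.
move=> ha ha' h.
rewrite -(modn_small ha) -(modn_small ha'); apply: nat_congd.
have := class a j; have := class a' j'; rewrite /kap in h.
move=> h1 h2; apply: (dvd3 h h1 h2); ring.
Qed.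

Lemma ordS_val (j : nat) : val (ordS (I j)) = j.+1 %% k.
Proof. by rewrite /= -addn1 modnDml addn1. Qed.

Lemma E_S j : e (ordS (I j)) = E j.+1.
Proof. by rewrite /E; congr e; apply: val_inj; rewrite ordS_val. Qed.

Lemma inc_odd a j : odd j -> (F a j).2 = (F a j.+1).2.
Proof.
move=> oj; apply: F_mk2.
  by have := hlab (I j); rewrite /= odd_mod oj E_S.
have := step a j; rewrite oj => h.
apply: (dvd2 (dvdz0 _) h); ring.
Qed.

Lemma inc_even a j : ~~ odd j -> (F a j).1 = (F a j.+1).1.
Proof.
move=> oj; apply: F_mk1.
  by have := hlab (I j); rewrite /= odd_mod (negbTE oj) E_S.
have := step a j; rewrite (negbTE oj) => h.
apply: (dvd2 (dvdz0 _) h); ring.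
Qed.

Lemma kap_same a j a' j' : j %% k = j' %% k ->
  (L2%:Z %| (lay a j - lay a' j')%R)%Z -> (tau%:Z %| (kap a j - kap a' j')%R)%Z.
Proof.
move=> hm h; apply: dvdz_tauL; rewrite /kap hm.
by apply: (dvd2 h (dvdz0 _)); ring.
Qed.

Lemma I_S j j' : I j' = ordS (I j) -> j' %% k = j.+1 %% k.
Proof. by move/(congr1 val); rewrite ordS_val. Qed.

Lemma kap_row a j a' j' : I j' = ordS (I j) -> ~~ odd (I j) ->
  (L2%:Z %| ((lay a j + (Mn j)%:Z) - (lay a' j' + (Mn j')%:Z))%R)%Z ->
  (tau%:Z %| (kap a j - kap a' j')%R)%Z.
Proof.
move=> hS ho h; have hj := I_S hS.
have hr : (j %% k).+1 < k.
  have hl := ltn_pmod j hk0.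
  have hne : (j %% k).+1 != k by apply/eqP => heq; move: keven; rewrite -heq /= ho.
  lia.
have hj2 : j' %% k = (j %% k).+1 by rewrite hj -addn1 -modnDml addn1 modn_small.
apply: dvdz_tauL; rewrite /kap hj2 s_succ // (negbTE ho) Mn_mod -hj2 Mn_mod.
by apply: (dvd2 h (dvdz0 _)); ring.
Qed.

Lemma kap_col a j a' j' : I j' = ordS (I j) -> odd (I j) ->
  (L2%:Z %| (lay a j - lay a' j')%R)%Z ->
  (tau%:Z %| (kap a j - kap a' j')%R)%Z.
Proof.
move=> hS ho h; have hj := I_S hS.
have hl := ltn_pmod j hk0.
case: (ltngtP (j %% k).+1 k) => heq.
- have hj2 : j' %% k = (j %% k).+1 by rewrite hj -addn1 -modnDml addn1 modn_small.
  apply: dvdz_tauL; rewrite /kap hj2 s_succ //= ho.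
  by apply: (dvd2 h (dvdz0 _)); ring.
- lia.
- have hj2 : j' %% k = 0 by rewrite hj -addn1 -modnDml addn1 heq modnn.
  have hj3 : j %% k = k.-1 by lia.
  rewrite /kap hj2 hj3 s_km1 /s big_ord0 -/(s k).
  apply: (dvd3 (dvdz_tauL h) (dvdz0 _) s_k_tau); ring.
Qed.

Lemma block_eq1 a j a' j' : a < tau -> a' < tau -> (F a j).1 = (F a' j').1 -> a = a'.
Proof.
move=> ha ha' /F_eq1 [hr hc].
apply: (kap_eq (j := j) (j' := j')) => //.
case: (hrow hr) => [hI|[[hS ho]|[hS ho]]].
- apply: kap_same; first by have := congr1 val hI.
  by apply: (dvd2 hc (dvdz0 _)); rewrite /Mn /E hI; ring.
- exact: kap_row.
- rewrite -opprB rpredN; apply: kap_row => //.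
  by rewrite -opprB rpredN.
Qed.

Lemma block_eq2 a j a' j' : a < tau -> a' < tau -> (F a j).2 = (F a' j').2 -> a = a'.
Proof.
move=> ha ha' /F_eq2 [hr hc].
apply: (kap_eq (j := j) (j' := j')) => //.
case: (hcol hr) => [hI|[[hS ho]|[hS ho]]].
- by apply: kap_same => //; have := congr1 val hI.
- exact: kap_col.
- rewrite -opprB rpredN; apply: kap_col => //.
  by rewrite -opprB rpredN.
Qed.

Lemma same_idx a j j' : j < l -> j' < l -> j %% k = j' %% k ->
  (L2%:Z %| (lay a j - lay a j')%R)%Z -> j = j'.
Proof.
move=> hj hj' hm h.
have hp : j %/ k < mm by rewrite ltn_divLR.
have hp' : j' %/ k < mm by rewrite ltn_divLR.
have : (L2%:Z %| (((j %/ k)%:Z - (j' %/ k)%:Z) * D%:Z)%R)%Z.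
  by rewrite (_ : (((j %/ k)%:Z - (j' %/ k)%:Z) * D%:Z = lay a j - lay a j')%R) // /lay hm; ring.
rewrite dvdzE abszM /= => h2.
have h4 := NL hL h2.
rewrite -/tau -/mm in h4.
have h5 : `|((j %/ k)%:Z - (j' %/ k)%:Z)%R|%N = 0.
  apply: h4; case: (leqP (j %/ k) (j' %/ k)) => hle.
    by rewrite distnEr //; apply: leq_ltn_trans (leq_subr _ _) hp'.
  by rewrite distnEl ?(ltnW hle) //; apply: leq_ltn_trans (leq_subr _ _) hp.
have hq : j %/ k = j' %/ k by move/eqP: h5; rewrite distn_eq0 => /eqP.
by rewrite (divn_eq j k) (divn_eq j' k) hq hm.
Qed.

Lemma E_per2 j : E (j + l) = E j.
Proof. by rewrite -E_mod -[RHS]E_mod /l addnC modnMDl. Qed.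

Lemma F_period a j : F a (j + l) = F a j.
Proof.
rewrite /F /G E_per2; congr (lifted_edge _ _ _ _ _); apply: val_inj => /=.
by rewrite (@bl_eq a (j + l) a j) // period.
Qed.

Lemma F_modl a j : F a (j %% l) = F a j.
Proof.
rewrite {2}(divn_eq j l) addnC; elim: (j %/ l) => [|q IH]; first by rewrite mul0n addn0.
by rewrite mulSn addnA [_ + l]addnC -addnA addnC F_period.
Qed.

Lemma F_inj a a' j j' : a < tau -> a' < tau -> j < l -> j' < l ->
  F a j = F a' j' -> a = a' /\ j = j'.
Proof.
move=> ha ha' hj hj' h.
have ha2 := block_eq2 ha ha' (congr1 snd h); subst a'.
have [hE hc] := F_eq h.
have hm : j %% k = j' %% k by have := congr1 val (einj hE).
by split => //; apply: (same_idx hj hj' hm hc).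
Qed.

Lemma inlE (A B : Type) (x y : A) : @inl A B x = inl y -> x = y. Proof. by case. Qed.
Lemma inrE (A B : Type) (x y : B) : @inr A B x = inr y -> x = y. Proof. by case. Qed.

Definition V (a j : nat) : ('I_L2 * 'I_m) + ('I_L2 * 'I_n) :=
  if odd j then inl (F a j).1 else inr (F a j).2.

Lemma V_inj a j j' : a < tau -> j < l -> j' < l -> V a j = V a j' -> j = j'.
Proof.
move=> ha hj hj'; rewrite /V.
case oj: (odd j); case oj': (odd j') => //.
- move=> h; have /F_eq1 [hr hc] := inlE h; have oI : odd (I j) by rewrite /= odd_mod.
  have oI' : odd (I j') by rewrite /= odd_mod.
  case: (hrow hr) => [hI|[[hS ho]|[hS ho]]]; last 2 first.
  + by rewrite oI in ho.
  + by rewrite oI' in ho.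
  have hm : j %% k = j' %% k by have := congr1 val hI.
  apply: (same_idx hj hj' hm); apply: (dvd2 hc (dvdz0 _)).
  by rewrite -Mn_mod hm Mn_mod; ring.
- move=> h; have /F_eq2 [hr hc] := inrE h; have oI : ~~ odd (I j) by rewrite /= odd_mod oj.
  have oI' : ~~ odd (I j') by rewrite /= odd_mod oj'.
  case: (hcol hr) => [hI|[[hS ho]|[hS ho]]]; last 2 first.
  + by rewrite ho in oI.
  + by rewrite ho in oI'.
  have hm : j %% k = j' %% k by have := congr1 val hI.
  exact: (same_idx hj hj' hm hc).
Qed.

Lemma V_next a j : incident (F a j) (V a j.+1).
Proof.
rewrite /V /=; case oj: (odd j).
  by right; rewrite inc_odd.
by left; rewrite inc_even ?oj.
Qed.

Lemma V_here a j : incident (F a j) (V a j).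
Proof. by rewrite /V; case: (odd j); [left|right]. Qed.

Definition Sset := [set lifted_edge z hL M (e i) a | i : 'I_k, a : 'I_L2].

Lemma F_in_S a j : F a j \in Sset.
Proof. by rewrite /F /G /E /Sset; apply: imset2_f. Qed.

Lemma odd_modl j : odd (j %% l) = odd j.
Proof. by rewrite {2}(divn_eq j l) oddD oddM (negbTE l_even) andbF. Qed.

Definition Bset (a : 'I_tau) : {set ('I_L2 * 'I_m) * ('I_L2 * 'I_n)} :=
  [set F a j | j : 'I_l].

Lemma Bset_cycle (a : 'I_tau) : is_cycle Sset (fun j : 'I_l => F a j).
Proof.
split; first exact: l_gt1.
split.
  by move=> j1 j2 /(F_inj (ltn_ord a) (ltn_ord a) (ltn_ord j1) (ltn_ord j2)) [_ h]; apply: val_inj.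
exists (fun j : 'I_l => V a j); split.
  by move=> j1 j2 /(V_inj (ltn_ord a) (ltn_ord j1) (ltn_ord j2)) h; apply: val_inj.
move=> j; split; first exact: F_in_S.
split; first exact: V_here.
rewrite /= /V F_modl odd_modl -/(V a j.+1); exact: V_next.
Qed.

Lemma Bset_F_in (a : 'I_tau) (j : 'I_l) : F a j \in Bset a.
Proof. by apply: imset_f. Qed.

Lemma main_union : disjoint_union_of_cycles Sset tau l.
Proof.
pose P := [set Bset a | a in 'I_tau].
have hdis : {in 'I_tau &, forall a a' : 'I_tau, a' != a -> [disjoint Bset a & Bset a']}.
  move=> a a' _ _ hne; rewrite disjoint_subset; apply/subsetP => x /imsetP [j1 _ ->].
  rewrite inE; apply/imsetP => -[j2 _ h].
  have [h1 _] := F_inj (ltn_ord a) (ltn_ord a') (ltn_ord j1) (ltn_ord j2) h.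
  by move: hne; rewrite (val_inj h1) eqxx.
have hne0 : forall a : 'I_tau, 'I_tau a -> Bset a != set0.
  by move=> a _; apply/set0Pn; exists (F a (Ordinal (ltnW l_gt1))); apply: Bset_F_in.
have [hpart hinj] := indexed_partition hdis hne0.
have hcov : cover P = Sset.
  apply/eqP; rewrite eqEcard; apply/andP; split.
    apply/subsetP => x /bigcupP [B /imsetP [a _ ->]] /imsetP [j _ ->]; exact: F_in_S.
  rewrite (card_partition hpart).
  have -> : \sum_(A in P) #|A| = \sum_(A in P) l.
    apply: eq_bigr => A /imsetP [a _ ->].
    rewrite card_imset ?card_ord //.
    by move=> j1 j2 /(F_inj (ltn_ord a) (ltn_ord a) (ltn_ord j1) (ltn_ord j2)) [_ h]; apply: val_inj.
  rewrite sum_nat_const card_in_imset // card_ord.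
  apply: (leq_trans (n := k * L2)).
    have -> : Sset = [set (fun p : 'I_k * 'I_L2 => lifted_edge z hL M (e p.1) p.2) p | p in predT].
      apply/setP => x; apply/imset2P/imsetP.
        by move=> [i a _ _ ->]; exists (i, a).
      by move=> [[i a] _ ->]; exists i a.
    apply: (leq_trans (leq_imset_card _ _)); apply: (leq_trans (max_card _)); by rewrite card_prod !card_ord.
  rewrite /l /mm mulnA [tau * _]mulnC divnK ?tau_dvdL // mulnC //.
exists P; split; first by rewrite -hcov.
split; first by rewrite card_in_imset // card_ord.
split.
  move=> B /imsetP [a _ ->]; exists (fun j : 'I_l => F a j); split => //.
  exact: Bset_cycle.
move=> B1 B2 /imsetP [a _ ->] /imsetP [a' _ ->] hne x y /imsetP [j _ ->] /imsetP [j' _ ->].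
have haa : a != a' by apply: contraNneq hne => ->.
split; apply/negP => /eqP h; move: haa; rewrite -val_eqE /=.
  by rewrite (block_eq1 (ltn_ord a) (ltn_ord a') h) eqxx.
by rewrite (block_eq2 (ltn_ord a) (ltn_ord a') h) eqxx.
Qed.

End Lift.


Theorem theorem2
  (z mb nb : nat) (hz : 0 < z) (H : 'M[bool]_(mb * z, nb * z))
  (hcirc : @circulant_blocks (mb * z) (nb * z) z H)
  (L2 d : nat) (hd : 1 <= d) (hdL : d <= L2)
  (M : nat -> nat -> nat) (hM : forall i j, M i j < d)
  (k : nat) (e : 'I_k -> 'I_(mb * z) * 'I_(nb * z))
  (hcyc : is_cycle (tanner (fun r c => H r c)) e)
  (hlab : forall i : 'I_k,
      if odd i then (e i).2 = (e (ordS i)).2 else (e i).1 = (e (ordS i)).1) :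
  let S := [set @lifted_edge (mb * z) (nb * z) z L2 (leq_trans hd hdL) M (e i) a | i : 'I_k, a : 'I_L2] in
  let tau := gcdn L2 (@Delta (mb * z) (nb * z) z L2 k M e) in
  S \subset tanner (@HMD (mb * z) (nb * z) z L2 H M) /\
  disjoint_union_of_cycles S tau (L2 * k %/ tau).
Proof.
move=> S t.
have [hk [einj [v [vinj hv]]]] := hcyc.
have hinc : forall i, incident (e i) (v i) /\ incident (e i) (v (ordS i)).
  by move=> i; have [_ h] := hv i.
have keven := k_even hk einj vinj hinc hlab.
split.
  apply/subsetP => x /imset2P [i a _ _ ->]; rewrite inE /HMD /=.
  have [he _] := hv i; move: he; rewrite inE => ->; rewrite /=.
  by rewrite modn_mod -surjective_pairing.
have := main_union z (leq_trans hd hdL) M hk keven einj hlab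
  (row_share hk einj vinj hinc hlab) (col_share hk einj vinj hinc hlab).
by rewrite /t -l_eq.
Qed.
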